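(* Let $n \in \mathbb{Z}_{>0}$ and $m \in \mathbb{Z}_{\geq 0}$, and let $f$ be the bijection described in the context. Then \[ f\left(\bigsqcup_{\mu \leq (2m)^n} \mathrm{SSYT}(\mu,n)\right) = \left\{ ((T,\lambda),t) \in \bigsqcup_{\lambda \leq (2m)^n \colon \text{even} } \mathrm{SSYT}(\lambda,n) \times \{0,1\}^n \;\middle|\; t^{-1}(1) \subseteq S(T) \right\}, \] where the right-hand side is in bijection with $\displaystyle \bigsqcup_{(T,\lambda) \in \bigsqcup_{\lambda \leq (2m)^n \colon \text{even} } \mathrm{SSYT}(\lambda,n)} \{0,1\}^{S(T)}$.
   Context: Let $n \in \mathbb{Z}_{>0}$ and $m \in \mathbb{Z}_{\geq 0}$. For a partition $\lambda$ with at most $n$ parts, $\mathrm{SSYT}(\lambda,n)$ denotes the set of semi-standard Young tableaux of shape $\lambda$ with entries in $\{1,2,\ldots,n\}$, using the convention that entries are weakly decreasing along rows and strictly decreasing down columns. For partitions $\lambda,\mu$ with $n$ parts, $\lambda \leq \mu$ means $\lambda_i \leq \mu_i$ for all $i$; $(k)^n=(k,k,\ldots,k)$; a partition is even if all its parts are even. Row insertion $T \leftarrow x$ (for a tableau $T$ and positive integer $x$): starting from the first row, insert $x$ into the row by replacing (bumping) the leftmost entry $y$ strictly less than $x$, then insert $y$ into the next row in the same manner; if no such entry exists in a row, place $x$ at the end of that row and stop. Fact used: if $U$ is a tableau of shape $\mu$ and $\lambda \leq \mu$ with $\mu\setminus\lambda$ having at most one box in each row, $p=\#(\mu\setminus\lambda)$,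 then there exist a unique tableau $T$ of shape $\lambda$ and integers $x_1<x_2<\cdots<x_p$ with $U = (((T \leftarrow x_1) \leftarrow x_2) \leftarrow \cdots) \leftarrow x_p$ (obtained by repeatedly applying reverse row insertion to the boxes of $\mu\setminus\lambda$ from bottom to top). The bijection $f \colon \bigsqcup_{\mu \leq (2m+1)^n} \mathrm{SSYT}(\mu,n) \to \bigsqcup_{\lambda \leq (2m)^n \colon \text{even}} \mathrm{SSYT}(\lambda,n) \times \{0,1\}^n$ is defined as follows: for $(U,\mu)$, let $\lambda$ be the even partition with $\lambda_i \in \{\mu_i,\mu_i-1\}$; take the unique $T \in \mathrm{SSYT}(\lambda,n)$ and $x_1<\cdots<x_p \leq n$ with $U = (((T \leftarrow x_1) \leftarrow x_2) \leftarrow \cdots) \leftarrow x_p$; define $t(i)=1$ if $i \in \{x_1,\ldots,x_p\}$ and $t(i)=0$ otherwise; set $f((U,\mu)) = ((T,\lambda),t)$. Its inverse sends $((T,\lambda),t)$ to $(U,\mathrm{shape}(U))$ with $U = (((T \leftarrow x_1) \leftarrow \cdots) \leftarrow x_p)$, $\{x_1<\cdots<x_p\}=t^{-1}(1)$. For $T \in \mathrm{SSYT}(\lambda,n)$ with $\lambda \leq (2m)^n$ even, $S(T) := \{T_{1,2m}+1, T_{1,2m}+2, \ldots, n\}$, where $T_{1,2m}:=0$ if $\lambda_1 < 2m$. (Equivalently, $S(T)=\{1\le j\le n \mid \pi'_{1,j}\ne 2m\}$ where $\pi'$ is the even symmetric plane partition (shifted staircase plane partition of size $n$ with entries $\le 2m$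 and even diagonal entries) whose row-wise conjugate is $T$.) *)

(* Defs.v *)
From mathcomp Require Import all_boot.
Set Implicit Arguments. Unset Strict Implicit. Unset Printing Implicit Defensive.

(* A partition with (exactly) n parts: a weakly decreasing nat sequence of
   length n (zero parts allowed). *)
Definition is_part (n : nat) (la : seq nat) : bool :=
  (size la == n) && sorted geq la.

Definition part_le (la mu : seq nat) : bool :=
  (size la == size mu) && all2 leq la mu.

Definition const_part (n k : nat) : seq nat := nseq n k.

Definition even_part (la : seq nat) : bool := all (fun k => ~~ odd k) la.

Definition evenize (mu : seq nat) : seq nat := [seq k - odd k | k <- mu].

(* A tableau is a list of rows (row i = i-th row from the top); we store
   exactly n rows (possibly empty) for a shape with n parts. *)
Definition tableau := seq (seq nat).

(* SSYT(la, n) with the convention: rows weakly decreasing, columns strictly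
   decreasing, entries in {1,...,n}. *)
Definition is_SSYT (n : nat) (la : seq nat) (T : tableau) : bool :=
  [&& is_part n la, size T == n, map size T == la,
      all (fun r => all (fun x => (0 < x) && (x <= n)) r) T,
      all (fun r => sorted geq r) T &
      all (fun i => all (fun j => nth 0 (nth [::] T i.+1) j < nth 0 (nth [::] T i) j)
                        (iota 0 (size (nth [::] T i.+1))))
          (iota 0 n.-1)].

Definition row_ins (r : seq nat) (x : nat) : option nat * seq nat :=
  let i := find (fun y => y < x) r in
  if i < size r then (Some (nth 0 r i), set_nth 0 r i x) else (None, rcons r x).

Fixpoint rins (T : tableau) (x : nat) : tableau :=
  match T with
  | [::] => [:: [:: x]]
  | r :: T' =>
      match row_ins r x with
      | (None, r') => r' :: T'
      | (Some y, r') => r' :: rins T' y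
      end
  end.

Definition rins_seq (T : tableau) (xs : seq nat) : tableau := foldl rins T xs.

(* t^{-1}(1) as the increasing list x_1 < ... < x_p of values in {1..n}
   (the ordinal i : 'I_n stands for the value i+1). *)
Definition ones (n : nat) (t : {ffun 'I_n -> bool}) : seq nat :=
  [seq (nat_of_ord i).+1 | i <- enum 'I_n & t i].

(* The bijection f, described by its graph:
   f((U,mu)) = ((T,la),t)  iff  la is the even partition with
   la_i in {mu_i, mu_i - 1}, T in SSYT(la,n), and
   U = (((T <- x_1) <- ...) <- x_p) with {x_1 < ... < x_p} = t^{-1}(1).
   (By the uniqueness fact in the paper, this determines ((T,la),t).) *)
Definition f_graph (n : nat) (U : tableau) (mu : seq nat)
    (T : tableau) (la : seq nat) (t : {ffun 'I_n -> bool}) : Prop :=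
  [/\ la = evenize mu, is_SSYT n la T & U = rins_seq T (ones t)].

(* T_{1,2m}, with T_{1,2m} := 0 if la_1 < 2m; for m = 0 we use the
   convention T_{1,0} := n. *)
Definition T12m (n m : nat) (T : tableau) : nat :=
  let r := nth [::] T 0 in
  if m == 0 then n
  else if size r < m.*2 then 0 else nth 0 r (m.*2).-1.

Definition S_of (n m : nat) (T : tableau) : pred nat :=
  fun j => (T12m n m T < j) && (j <= n).

(* Main.v *)
Require Import Defs.
From mathcomp Require Import all_boot zify.
Set Implicit Arguments. Unset Strict Implicit. Unset Printing Implicit Defensive.

Definition cs (r s : seq nat) : bool :=
  (size s <= size r) && all (fun j => nth 0 s j < nth 0 r j) (iota 0 (size s)).

Lemma csP r s : reflect (size s <= size r /\ forall j, j < size s -> nth 0 s j < nth 0 r j) (cs r s).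
Proof.
apply: (iffP andP) => [[H1 /allP H2]|[H1 H2]]; split => //.
  by move=> j hj; apply: H2; rewrite mem_iota.
by apply/allP => j; rewrite mem_iota => /andP[_ hj]; apply: H2.
Qed.

Fixpoint good (T : tableau) : bool :=
  if T is r :: T' then cs r (head [::] T') && good T' else true.

Notation fnd r x := (find (fun y => y < x) r).

Lemma row_ins_bump r x : fnd r x < size r ->
  row_ins r x = (Some (nth 0 r (fnd r x)), set_nth 0 r (fnd r x) x).
Proof. by rewrite /row_ins => ->. Qed.

Lemma row_ins_app r x : ~~ (fnd r x < size r) -> row_ins r x = (None, rcons r x).
Proof. by rewrite /row_ins => /negbTE ->. Qed.

Lemma cs_ins r s x : cs r s -> fnd r x < size r ->
  cs (set_nth 0 r (fnd r x) x) (row_ins s (nth 0 r (fnd r x))).2.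
Proof.
move=> /csP [Hsz Hlt] Hj.
set j := fnd r x; set y := nth 0 r j.
have Hyx : y < x by have := nth_find 0 (a := fun y => y < x) (s := r); rewrite has_find; apply.
have Hbef : forall i, i < j -> x <= nth 0 r i.
  by move=> i hi; have := before_find 0 hi; rewrite ltnNge => /negbFE.
have Hszr : size (set_nth 0 r j x) = size r by rewrite size_set_nth; apply/maxn_idPr.
have Hkj : fnd s y <= j.
  case: (ltnP j (size s)) => hjs; last by apply: leq_trans (find_size _ _) hjs.
  rewrite leqNgt; apply/negP => /(before_find 0); rewrite Hlt //.
have Hr'k : y < nth 0 (set_nth 0 r j x) (fnd s y).
  rewrite nth_set_nth /=; case: eqP => // /eqP hne.
  by apply: leq_trans Hyx (Hbef _ _); rewrite ltn_neqAle hne Hkj.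
have Hr'i : forall i, i < size s -> nth 0 s i < nth 0 (set_nth 0 r j x) i.
  move=> i hi; rewrite nth_set_nth /=; case: eqP => [e|_]; last exact: Hlt.
  by rewrite e in hi *; exact: ltn_trans (Hlt _ hi) Hyx.
rewrite /row_ins; case: ifP => hk /=; apply/csP; split.
- by rewrite size_set_nth Hszr; apply/(leq_trans _ Hsz)/eq_leq/maxn_idPr.
- move=> i; rewrite size_set_nth (maxn_idPr hk) => hi; rewrite nth_set_nth /=.
  by case: eqP => [->|_]; [exact: Hr'k | exact: Hr'i].
- rewrite size_rcons Hszr; have : fnd s y = size s by apply/eqP; rewrite eqn_leq find_size leqNgt hk.
  by move=> e; rewrite -e; apply: leq_ltn_trans Hkj Hj.
- move=> i; rewrite size_rcons ltnS leq_eqVlt => /orP[/eqP ->|hi].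
    rewrite nth_rcons ltnn eqxx; have : fnd s y = size s by apply/eqP; rewrite eqn_leq find_size leqNgt hk.
    by move=> <-.
  by rewrite nth_rcons hi; exact: Hr'i.
Qed.

Lemma cs_rcons r s x : cs r s -> cs (rcons r x) s.
Proof.
move=> /csP [H1 H2]; apply/csP; split; first by rewrite size_rcons ltnW.
by move=> j hj; rewrite nth_rcons (leq_trans hj H1); apply: H2.
Qed.

Lemma head_rins T y : head [::] (rins T y) = (row_ins (head [::] T) y).2.
Proof. by case: T => [|s T] //=; case: (row_ins s y) => [[z|] s']. Qed.

Lemma good_rins T x : good T -> good (rins T x).
Proof.
elim: T x => [|r T IH] x //=.
move=> /andP [Hcs Hg]; rewrite /row_ins; case: ifP => hj /=.
  rewrite IH // andbT head_rins; exact: cs_ins.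
by rewrite Hg andbT; apply: cs_rcons.
Qed.

Lemma sorted_row_ins r x : sorted geq r -> sorted geq (row_ins r x).2.
Proof.
move=> /(sortedP 0) Hs; rewrite /row_ins; case: ifP => hj /=; apply/(sortedP 0).
  set j := fnd r x.
  have Hyx : nth 0 r j < x by have := nth_find 0 (a := fun y => y < x) (s := r); rewrite has_find; apply.
  rewrite size_set_nth (maxn_idPr hj) => i hi; rewrite !nth_set_nth /=.
  case: eqP => [e|ne]; case: eqP => [e'|ne'] /=.
  - by [].
  - have hij : i < j by rewrite -e ltnSn.
    by have := before_find 0 hij; rewrite /geq /= ltnNge => /negbFE.
  - rewrite /geq /=; rewrite -e' in Hyx; have := Hs _ hi; rewrite /geq /=; lia.
  - exact: Hs.
have Hall : forall i, i < size r -> x <= nth 0 r i.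
  move=> i hi; have hij : i < fnd r x by move: hj; rewrite ltnNge => /negbFE; apply: leq_trans hi.
  by have := before_find 0 hij; rewrite ltnNge => /negbFE.
move=> i; rewrite size_rcons ltnS => hi; rewrite !nth_rcons.
case: (ltnP i.+1 (size r)) => h1.
  by rewrite (ltnW h1); exact: Hs.
have e : i.+1 = size r by apply/eqP; rewrite eqn_leq h1 andbT.
by rewrite e eqxx -e ltnSn /geq /=; apply: Hall; rewrite -e.
Qed.

Lemma all_row_ins (P : pred nat) r x : all P r -> P x ->
  all P (row_ins r x).2 /\ (forall y, (row_ins r x).1 = Some y -> P y).
Proof.
move=> /allP Hr Px; rewrite /row_ins; case: ifP => hj /=; split => //.
- apply/(all_nthP 0) => i; rewrite size_set_nth (maxn_idPr hj) => hi.
  by rewrite nth_set_nth /=; case: eqP => // _; apply: Hr; apply: mem_nth.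
- by move=> y [<-]; apply: Hr; apply: mem_nth.
- by apply/allP => z; rewrite mem_rcons inE => /orP[/eqP ->|/Hr].
Qed.

Lemma all_rins (P : pred nat) T x : all (all P) T -> P x -> all (all P) (rins T x).
Proof.
elim: T x => [|r T IH] x /=; first by move=> _ ->.
move=> /andP [Hr HT] Px; have [H1 H2] := all_row_ins Hr Px.
move: H1 H2; case: (row_ins r x) => [[y|] r'] /= H1 H2; rewrite H1 //=.
by apply: IH => //; apply: H2.
Qed.

Lemma sorted_rins T x : all (sorted geq) T -> all (sorted geq) (rins T x).
Proof.
elim: T x => [|r T IH] x //= /andP [Hr HT].
have := sorted_row_ins x Hr; case: (row_ins r x) => [[y|] r'] /= -> //=.
exact: IH.
Qed.

Lemma size_rins T x : size (rins T x) = size T \/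
  (size (rins T x) = (size T).+1 /\ nth [::] (rins T x) (size T) != [::]).
Proof.
elim: T x => [|r T IH] x /=; first by right.
case: (row_ins r x) => [[y|] r'] /=; last by left.
by case: (IH y) => [->|[-> H]]; [left|right].
Qed.

Lemma good_nth T : good T -> forall i, i.+1 < size T -> cs (nth [::] T i) (nth [::] T i.+1).
Proof.
elim: T => [|r T IH] //= /andP [Hc Hg] [|i] /=.
  by case: T {IH Hg} Hc.
by move=> hi; apply: IH.
Qed.

Lemma first_bound n T : good T -> all (all (fun z => 0 < z <= n)) T ->
  forall i, i < size T -> nth [::] T i != [::] -> nth 0 (nth [::] T i) 0 + i <= n.
Proof.
move=> Hg /allP Ha; elim=> [|i IH] hi hne.
  have /allP := Ha _ (mem_nth [::] hi); move=> /(_ (nth 0 (nth [::] T 0) 0)).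
  by rewrite addn0 mem_nth ?lt0n ?size_eq0 // => /(_ isT) /andP[].
have /csP [Hsz Hlt] := good_nth Hg hi.
have hne' : nth [::] T i != [::].
  by rewrite -size_eq0 -lt0n; apply: leq_trans Hsz; rewrite lt0n size_eq0.
have := IH (ltnW hi) hne'; have := Hlt 0; rewrite lt0n size_eq0 => /(_ hne); lia.
Qed.

Definition Inv n (T : tableau) := [&& size T == n, good T, all (sorted geq) T &
  all (all (fun z => 0 < z <= n)) T].

Lemma inv_rins n T x : 0 < x <= n -> Inv n T -> Inv n (rins T x).
Proof.
move=> Hx /and4P [/eqP Hs Hg Ho Ha].
have Hg' := good_rins x Hg; have Ha' := all_rins Ha Hx.
apply/and4P; split => //; last exact: sorted_rins.
case: (size_rins T x) => [->|[Hsz Hne]]; first by rewrite Hs.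
have := first_bound Hg' Ha' (i := size T); rewrite Hsz ltnSn => /(_ isT Hne).
have Hrow : nth [::] (rins T x) (size T) \in rins T x by apply: mem_nth; rewrite Hsz.
have /allP Hz := allP Ha' _ Hrow.
have := Hz (nth 0 (nth [::] (rins T x) (size T)) 0); rewrite mem_nth ?lt0n ?size_eq0 //.
move=> /(_ isT); rewrite Hs; lia.
Qed.

Lemma inv_rins_seq n T xs : all (fun z => 0 < z <= n) xs -> Inv n T -> Inv n (rins_seq T xs).
Proof.
elim: xs T => [|x xs IH] T //= /andP [Hx Hxs] HT.
by apply: IH => //; apply: inv_rins.
Qed.

Fixpoint row_seq (r : seq nat) (xs : seq nat) : seq nat * seq nat :=
  match xs with
  | [::] => ([::], r)
  | x :: xs' =>
      let p := row_ins r x in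
      let q := row_seq p.2 xs' in
      (if p.1 is Some y then y :: q.1 else q.1, q.2)
  end.

Lemma rins_seq_cons r T xs :
  rins_seq (r :: T) xs = (row_seq r xs).2 :: rins_seq T (row_seq r xs).1.
Proof.
elim: xs r T => [|x xs IH] r T //=.
rewrite /rins_seq /=; case: (row_ins r x) => [[y|] r1] /=; exact: IH.
Qed.

Lemma bump_facts r x b : sorted geq r -> b \in r -> b < x ->
  [/\ fnd r x < size r, b <= nth 0 r (fnd r x), nth 0 r (fnd r x) < x,
      x \in set_nth 0 r (fnd r x) x & size (set_nth 0 r (fnd r x) x) = size r].
Proof.
move=> Hs Hb Hbx.
have Hhas : has (fun y => y < x) r by apply/hasP; exists b.
have Hj : fnd r x < size r by rewrite -has_find.
have Hji : fnd r x <= index b r.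
  rewrite leqNgt; apply/negP => /(before_find 0); rewrite nth_index // Hbx.
  by [].
split => //.
- have Htr : transitive geq by move=> a c d /=; rewrite /geq /=; lia.
  have Hrf : reflexive geq by move=> a; rewrite /geq /=.
  have Hmono := sorted_leq_nth Htr Hrf 0 Hs.
  have := Hmono (fnd r x) (index b r); rewrite nth_index //; apply => //.
  by rewrite inE index_mem.
- exact: (nth_find 0 Hhas).
- by apply/(nthP 0); exists (fnd r x); rewrite ?nth_set_nth /= ?eqxx // size_set_nth (maxn_idPr Hj).
- by rewrite size_set_nth (maxn_idPr Hj).
Qed.

Lemma row_seq_bump r xs b : sorted geq r -> b \in r -> path ltn b xs ->
  [/\ all (leq b) (row_seq r xs).1, sorted ltn (row_seq r xs).1 & size (row_seq r xs).2 = size r].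
Proof.
elim: xs r b => [|x xs IH] r b //= Hs Hb /andP [Hbx Hp].
have [Hj Hby Hyx Hxr Hsz] := bump_facts Hs Hb Hbx.
have Hs1 := sorted_row_ins x Hs.
rewrite row_ins_bump // in Hs1 *; rewrite /=.
have [H1 H2 H3] := IH _ _ Hs1 Hxr Hp.
split.
- rewrite /= Hby /=; apply/allP => z /(allP H1); exact: leq_trans (ltnW Hbx).
- rewrite /= (path_sortedE ltn_trans) H2 andbT; apply/allP => z /(allP H1).
  exact: leq_trans Hyx.
- by rewrite H3 Hsz.
Qed.

Lemma row_seq_main r xs : sorted geq r -> sorted ltn xs ->
  [/\ sorted ltn (row_seq r xs).1, size r <= size (row_seq r xs).2 <= (size r).+1,
    forall x xs', xs = x :: xs' -> fnd r x < size r -> size (row_seq r xs).2 = size r &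
    forall x xs', xs = x :: xs' -> ~~ (fnd r x < size r) -> size (row_seq r xs).2 = (size r).+1].
Proof.
case: xs => [|x xs] Hs /= Hxs; first by split => //; rewrite leqnn leqnSn.
have Hs1 := sorted_row_ins x Hs.
case: (boolP (fnd r x < size r)) => Hj.
  have Hhas : has (fun y => y < x) r by rewrite has_find.
  have Hyx : nth 0 r (fnd r x) < x := nth_find 0 Hhas.
  have Hsz : size (set_nth 0 r (fnd r x) x) = size r by rewrite size_set_nth (maxn_idPr Hj).
  have Hxr : x \in set_nth 0 r (fnd r x) x.
    by apply/(nthP 0); exists (fnd r x); rewrite ?nth_set_nth /= ?eqxx // Hsz.
  rewrite row_ins_bump // in Hs1 *; rewrite /=.
  have [H1 H2 H3] := row_seq_bump Hs1 Hxr Hxs.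
  split => //.
  - rewrite /= (path_sortedE ltn_trans) H2 andbT; apply/allP => z /(allP H1).
    exact: leq_trans Hyx.
  - by rewrite H3 Hsz leqnn leqnSn.
  - by move=> x' xs' [<- _] _; rewrite H3.
  - by move=> x' xs' [<- _]; rewrite Hj.
rewrite row_ins_app // in Hs1 *; rewrite /=.
have Hxr : x \in rcons r x by rewrite mem_rcons inE eqxx.
have [H1 H2 H3] := row_seq_bump Hs1 Hxr Hxs.
split => //.
- by rewrite H3 size_rcons leqnn leqnSn.
- by move=> x' xs' [<- _]; rewrite (negbTE Hj).
- by move=> x' xs' [<- _]; rewrite H3 size_rcons.
Qed.

Lemma rows_growth T xs : all (sorted geq) T -> sorted ltn xs -> forall i, i < size T ->
  size (nth [::] T i) <= size (nth [::] (rins_seq T xs) i) <= (size (nth [::] T i)).+1.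
Proof.
elim: T xs => [|r T IH] xs //= /andP [Hr HT] Hxs [|i] hi; rewrite rins_seq_cons /=.
  by have [] := row_seq_main Hr Hxs.
have [H1 _ _ _] := row_seq_main Hr Hxs.
exact: IH.
Qed.

Lemma ones_sorted n (t : {ffun 'I_n -> bool}) : sorted ltn (ones t).
Proof.
have -> : ones t = map succn [seq val i | i <- enum 'I_n & t i] by rewrite -map_comp.
rewrite sorted_map.
have : sorted ltn [seq val i | i <- enum 'I_n & t i].
  apply: (subseq_sorted ltn_trans _ (iota_ltn_sorted 0 n)).
  by rewrite -val_enum_ord; apply: map_subseq; apply: filter_subseq.
by [].
Qed.

Lemma ones_range n (t : {ffun 'I_n -> bool}) : all (fun z => 0 < z <= n) (ones t).
Proof. by apply/allP => z /mapP [i _ ->]; rewrite ltn0Sn ltn_ord. Qed.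

Lemma all2_nseq (s : seq nat) k : all2 leq s (nseq (size s) k) = all (fun x => x <= k) s.
Proof. by elim: s => //= x s ->. Qed.

Lemma part_le_nseq s n k : part_le s (const_part n k) = (size s == n) && all (fun x => x <= k) s.
Proof.
rewrite /part_le /const_part size_nseq; case: eqP => //= <-; exact: all2_nseq.
Qed.

Lemma sorted_geqP (s : seq nat) :
  reflect (forall i, i.+1 < size s -> nth 0 s i.+1 <= nth 0 s i) (sorted geq s).
Proof. exact: (sortedP 0). Qed.

Lemma good_of_nth T : (forall i, i.+1 < size T -> cs (nth [::] T i) (nth [::] T i.+1)) -> good T.
Proof.
elim: T => [|r T IH] //= H; apply/andP; split.
  by case: T {IH} H => [|s T] // H; exact: (H 0).
by apply: IH => i hi; apply: (H i.+1).
Qed.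

Lemma SSYT_inv n la T : is_SSYT n la T -> Inv n T /\ la = map size T.
Proof.
case/and5P => /andP [/eqP Hla Hsl] /eqP HT /eqP Hsh Ha /andP [Hs Hc].
split; last by rewrite Hsh.
apply/and4P; split => //; first by rewrite HT.
apply: good_of_nth => i hi; apply/csP; split.
  move: Hsl; rewrite -Hsh => /sorted_geqP /(_ i); rewrite size_map => /(_ hi).
  by rewrite !(nth_map [::]) // ltnW.
move=> j hj; move/allP: Hc => /(_ i); rewrite mem_iota add0n.
have hi' : i < n.-1 by rewrite -HT; lia.
by move=> /(_ hi') /allP /(_ j); rewrite mem_iota add0n hj => /(_ isT).
Qed.

Lemma inv_SSYT n T : Inv n T -> is_SSYT n (map size T) T.
Proof.
case/and4P => /eqP HT Hg Hs Ha; apply/and5P; split => //.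
- rewrite /is_part size_map HT eqxx /=; apply/sorted_geqP => i; rewrite size_map => hi.
  rewrite !(nth_map [::]) ?(ltnW hi) //.
  by have /csP [] := good_nth Hg hi.
- by rewrite HT.
- rewrite Hs /=; apply/allP => i; rewrite mem_iota add0n => hi.
  have hi' : i.+1 < size T by rewrite HT; lia.
  have /csP [_ H] := good_nth Hg hi'.
  by apply/allP => j; rewrite mem_iota add0n => hj; apply: H.
Qed.

Lemma sorted_last_min (r : seq nat) z : sorted geq r -> z \in r -> nth 0 r (size r).-1 <= z.
Proof.
move=> Hs Hz.
have Htr : transitive geq by move=> a c d /=; rewrite /geq /=; lia.
have Hrf : reflexive geq by move=> a; rewrite /geq /=.
have Hmono := sorted_leq_nth Htr Hrf 0 Hs.
have hsz : 0 < size r by case: r Hz {Hs Hmono}.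
have := Hmono (index z r) (size r).-1; rewrite nth_index //; apply.
- by rewrite inE index_mem.
- by rewrite inE; lia.
- by rewrite -ltnS prednK // index_mem.
Qed.

Theorem proposition3p16 (n m : nat) (hn : 0 < n)
    (la : seq nat) (T : tableau) (t : {ffun 'I_n -> bool}) :
  even_part la -> part_le la (const_part n m.*2) -> is_SSYT n la T ->
  ((exists (mu : seq nat) (U : tableau),
      [/\ part_le mu (const_part n m.*2), is_SSYT n mu U & f_graph U mu T la t])
   <-> {subset ones t <= S_of n m T}).
Proof.
move=> Hev Hle HT.
have [HinvT Hla] := SSYT_inv HT.
have Hinv0 := HinvT; case/and4P: Hinv0 => /eqP HsT HgT HsoT HaT.
move: Hle; rewrite part_le_nseq => /andP [_ /allP Hle].
have Hxs := ones_sorted t; have Hrange := ones_range t.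
case: T HT Hla HinvT HsT HgT HsoT HaT => [|r T'] HT Hla HinvT HsT HgT HsoT HaT.
  by rewrite -HsT in hn.
have Hr : sorted geq r by case/andP: HsoT.
have Hr2m : size r <= m.*2 by apply: Hle; rewrite Hla inE eqxx.
have Hmain := row_seq_main Hr Hxs.
split.
- move=> [mu [U [Hmu HU [Hlamu HT' HUe]]]] z hz.
  have /andP [hz0 hzn] := allP Hrange z hz.
  rewrite /S_of; apply/andP; split => //; rewrite ltnNge; apply/negP => Hzle.
  case Exs : (ones t) Hmain hz => [|x1 xs'] // [_ _ _ Happ] hz.
  have Hx1z : x1 <= z.
    move: hz; rewrite inE => /orP [/eqP -> //|hz].
    move: Hxs; rewrite Exs /= (path_sortedE ltn_trans) => /andP [/allP /(_ z hz) /ltnW //].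
  have [HinvU HmuU] := SSYT_inv HU.
  move: Hmu; rewrite part_le_nseq => /andP [_ /allP Hmu].
  have HU0 : size (nth [::] U 0) = size (row_seq r (ones t)).2.
    by rewrite HUe rins_seq_cons.
  have : size (nth [::] U 0) <= m.*2.
    apply: Hmu; rewrite HmuU; apply: map_f; apply: mem_nth.
    by case/and4P: HinvU => /eqP -> _ _ _.
  rewrite HU0 Exs (Happ x1 xs') //.
    have : size r = m.*2.
      move: Hzle; rewrite /T12m /=; case: eqP => [e0|_]; first by move: Hr2m; rewrite e0 leqn0 => /eqP.
      case: ltnP => h Hz; first by move: (leq_trans hz0 Hz).
      by apply/eqP; rewrite eqn_leq Hr2m h.
    by move=> ->; rewrite ltnn.
  rewrite -has_find; apply/hasP => -[y hy hyx].
  have := sorted_last_min Hr hy; move: Hzle; rewrite /T12m /=.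
  case: eqP => [e|_].
    by move: Hr2m; rewrite e /= leqn0 size_eq0 => /eqP Er; rewrite Er in hy.
  case: ltnP => h H1 H2; first by move: (leq_trans hz0 H1).
  have e2 : size r = m.*2 by apply/eqP; rewrite eqn_leq Hr2m h.
  rewrite e2 in H2; clear -H1 H2 hyx Hx1z; lia.
- move=> Hsub.
  set U := rins_seq (r :: T') (ones t).
  have HinvU : Inv n U := inv_rins_seq Hrange HinvT.
  have HsU : size U = n by case/and4P: HinvU => /eqP.
  have HUss := inv_SSYT HinvU.
  exists (map size U), U; split => //.
  + rewrite part_le_nseq size_map HsU eqxx /=.
    have Hm0 : size (nth [::] U 0) <= m.*2.
      rewrite /U rins_seq_cons /=.
      case Exs : (ones t) Hmain => [|x1 xs'] [_ /andP [_ Hup] Hbump _].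
        by rewrite /= in Hup *.
      have hx1 := Hsub x1; rewrite Exs inE eqxx in hx1; have /andP [hT hxn] := hx1 isT.
      case: (ltnP (size r) (m.*2)) => h.
        have : ~~ odd (size r) by move/allP: Hev; apply; rewrite Hla inE eqxx.
        move=> Ev; have ed : size r = (size r)./2.*2.
          by rewrite -[in LHS](odd_double_half (size r)) (negbTE Ev).
        have h3 : (size r).+1 <= m.*2.
          rewrite ed in h *; move: h; set k := (size r)./2; clear; rewrite ltn_double => h.
          by [].
        exact: leq_trans Hup h3.
      have e2 : size r = m.*2 by apply/eqP; rewrite eqn_leq Hr2m h.
      rewrite (Hbump x1 xs') //.
      rewrite -has_find; apply/hasP; exists (nth 0 r (size r).-1).
        apply: mem_nth; move: hT; rewrite /T12m /=; case: eqP => [e0|ne].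
          by move=> H; move: (leq_trans H hxn); rewrite ltnn.
        rewrite e2; clear -ne; case: m ne => //= m' _; rewrite doubleS; by [].
      move: hT; rewrite /T12m /=; case: eqP => [e0|ne].
        by move=> H; move: (leq_trans H hxn); rewrite ltnn.
      by rewrite e2 ltnn.
    have Hso : sorted geq (map size U) by case/and5P: HUss => /andP [].
    apply/(all_nthP 0) => i; rewrite size_map => hi.
    rewrite (nth_map [::]) //; case: i hi => [|i] hi; first exact: Hm0.
    apply: leq_trans Hm0.
    move/sorted_geqP: Hso => Hso.
    elim: i hi => [|i IH] hi.
      by have := Hso 0; rewrite size_map !(nth_map [::]) //; [apply | exact: ltnW].
    apply: leq_trans (IH (ltnW hi)).
    by have := Hso i.+1; rewrite size_map !(nth_map [::]) //; [apply | exact: ltnW].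
  + split => //; rewrite Hla /evenize -map_comp.
    apply: (@eq_from_nth _ 0); first by rewrite !size_map HsU HsT.
    move=> i; rewrite size_map => hi.
    rewrite !(nth_map [::]) ?HsU -?HsT //=.
    have := rows_growth HsoT Hxs hi; rewrite -/U.
    have : ~~ odd (size (nth [::] (r :: T') i)).
      by move/allP: Hev; apply; rewrite Hla; apply: map_f; apply: mem_nth.
    set a := size (nth [::] (r :: T') i); set b := size (nth [::] U i).
    move=> Ha /andP [h1 h2].
    have : b = a \/ b = a.+1 by clear -h1 h2; lia.
    by case=> ->; rewrite /= ?(negbTE Ha) ?Ha ?subn0 ?subn1.
Qed.
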